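(* Let $h>0$ and let $\gamma=(\gamma^\tau,\gamma^\omega):[0,1]\to\mathbb{R}^{1+d}$ satisfy the Brownian-like scaling assumption described in the context. Then for every multi-index $\alpha\in\mathcal{A}$, $$\mathbb{E}\big[\|I^\gamma_\alpha(1)\|^2\big]=O\big(h^{2\,\mathrm{ord}(\alpha)}\big).$$
   Context: Brownian-like scaling assumption: $\gamma$ depends on the step size $h>0$; it is a continuous piecewise linear path with a fixed number $m\in\mathbb{N}$ of linear pieces, vertices $0=r_0<\dots<r_m=1$, and almost surely finite length; writing $\gamma_{r_i,r_{i+1}}=\gamma(r_{i+1})-\gamma(r_i)$, (1) the increments $\gamma^\tau_{r_i,r_{i+1}}$ are deterministic; (2) $\gamma^\tau_{r_i,r_{i+1}}=O(h)$ and for every $j\in\{1,\dots,d\}$ and $k\in\mathbb{N}$, $\mathbb{E}[|(\gamma^\omega_{r_i,r_{i+1}})_j|^{2k}]=O(h^k)$. $O(h^q)$ means bounded by a constant independent of $h$ times $h^q$ for all sufficiently small $h$. Multi-indices: $\mathcal{A}=\bigcup_{n\ge0}\{\tau,\omega\}^n$; for $\alpha=(\alpha_1,\dots,\alpha_n)$, $|\alpha|_\tau$ and $|\alpha|_\omega$ are the numbers of entries equal to $\tau$ and $\omega$, and $\mathrm{ord}(\alpha)=|\alpha|_\tau+\tfrac12|\alpha|_\omega$. The iterated integral $I^\gamma_\alpha(1)\in(\mathbb{R}^d)^{\otimes|\alpha|_\omega}$ is $$I^\gamma_\alpha(1)=\int_0^1\int_0^{r_1}\cdots\int_0^{r_{n-1}}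 d\gamma^{\alpha_1}(r_n)\,d\gamma^{\alpha_2}(r_{n-1})\cdots d\gamma^{\alpha_n}(r_1),$$ where a $\tau$-entry contributes the scalar differential $d\gamma^\tau$ and an $\omega$-entry contributes a tensor factor $d\gamma^\omega\in\mathbb{R}^d$ (the tensor factors taken in the order of the entries); integrals are Riemann–Stieltjes; $I^\gamma_{\emptyset}(1)=1$. *)

(* Defs.v *)
From HB Require Import structures.
From mathcomp Require Import all_boot all_order all_algebra.
From mathcomp Require Import all_classical all_reals all_analysis.
Set Implicit Arguments.
Unset Strict Implicit.
Unset Printing Implicit Defensive.
Import Order.TTheory GRing.Theory Num.Theory.
Import numFieldNormedType.Exports.
Local Open Scope classical_set_scope.
Local Open Scope ring_scope.

(* Letters of multi-indices: tau (time/drift) and omega (noise). *)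
Inductive letter := tau | omega.

Definition is_tau (a : letter) : bool := if a is tau then true else false.
Definition is_omega (a : letter) : bool := if a is omega then true else false.

Definition ntau (al : seq letter) : nat := count is_tau al.
Definition nomega (al : seq letter) : nat := count is_omega al.

(* 2 * ord(alpha) = 2 |alpha|_tau + |alpha|_omega  (a natural number) *)
Definition two_ord (al : seq letter) : nat := 2 * ntau al + nomega al.

Section PL.
Variable R : realType.

Definition vertices (m : nat) (r : nat -> R) : Prop :=
  r 0%N = 0 /\ r m = 1 /\ (forall i, (i < m)%N -> r i < r i.+1).

Definition linear_on_pieces (m : nat) (r : nat -> R) (x : R -> R) : Prop :=
  forall i, (i < m)%N -> forall s, r i <= s <= r i.+1 ->
    x s = x (r i) + (s - r i) / (r i.+1 - r i) * (x (r i.+1) - x (r i)).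

Definition pl_slope (m : nat) (r : nat -> R) (x : R -> R) (s : R) : R :=
  \sum_(i < m) (if (r i <= s) && (s < r i.+1)
                then (x (r i.+1) - x (r i)) / (r i.+1 - r i) else 0).

(* Riemann--Stieltjes integral int_0^t f(s) dx(s) for a piecewise linear
   integrator x (dx(s) = x'(s) ds on each piece). *)
Definition rs_int (m : nat) (r : nat -> R) (x : R -> R) (f : R -> R) (t : R) : R :=
  \int[lebesgue_measure]_(s in `[0, t]) (f s * pl_slope m r x s).

Definition chan (d : nat) (gt : R -> R) (gw : R -> 'rV[R]_d)
    (c : option 'I_d) : R -> R :=
  match c with None => gt | Some j => fun s => gw s ord0 j end.

(* scalar iterated integral, channels listed in reverse order:
   iint_rev (c :: cs) t = int_0^t iint_rev cs (s) dx_c(s) *)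
Fixpoint iint_rev (d m : nat) (r : nat -> R) (gt : R -> R) (gw : R -> 'rV[R]_d)
    (cs : seq (option 'I_d)) (t : R) : R :=
  match cs with
  | [::] => 1
  | c :: cs' => rs_int m r (chan gt gw c) (iint_rev m r gt gw cs') t
  end.

(* iint [c_1;...;c_n] t = int_0^t int_0^{r_1} ... dx_{c_1}(r_n) ... dx_{c_n}(r_1) *)
Definition iint (d m : nat) (r : nat -> R) (gt : R -> R) (gw : R -> 'rV[R]_d)
    (cs : seq (option 'I_d)) (t : R) : R :=
  iint_rev m r gt gw (rev cs) t.
End PL.

Fixpoint fill (d : nat) (al : seq letter) (w : seq 'I_d) : seq (option 'I_d) :=
  match al with
  | [::] => [::]
  | tau :: al' => None :: fill al' w
  | omega :: al' =>
      match w with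
      | j :: w' => Some j :: fill al' w'
      | [::] => None :: fill al' [::] (* never used: w has length |al|_omega *)
      end
  end.

(* || I^gamma_alpha(1) ||^2 : squared Euclidean (Hilbert--Schmidt) norm of the
   tensor in (R^d)^{(x) |alpha|_omega}; its component at the coordinate word w
   is the scalar iterated integral with d gamma^omega replaced by
   d gamma^omega_{w_k} in the k-th omega slot. *)
Definition sig_norm2 (R : realType) (d m : nat) (r : nat -> R)
    (gt : R -> R) (gw : R -> 'rV[R]_d) (al : seq letter) : R :=
  \sum_(w : (nomega al).-tuple 'I_d) (iint m r gt gw (fill al w) 1) ^+ 2.

(* Main.v *)
Require Import Defs.
From HB Require Import structures.
From mathcomp Require Import all_boot all_order all_algebra.
From mathcomp Require Import all_classical all_reals all_analysis.
From mathcomp Require Import lra ring measurable_realfun.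
Import Order.TTheory GRing.Theory Num.Theory.
Import numFieldNormedType.Exports.
Local Open Scope ring_scope.
Section A.
Context d (T : measurableType d) (R : realType) (mu : measure T R).
Local Open Scope ereal_scope.
Lemma le_intT (f g : T -> \bar R) : (forall x, 0 <= f x) -> (forall x, f x <= g x) ->
  \int[mu]_x f x <= \int[mu]_x g x.
Proof.
move=> f0 fg.
have g0 : forall x, 0 <= g x by move=> x; exact: le_trans (f0 x) (fg x).
rewrite (ge0_integralTE mu f0) (ge0_integralTE mu g0) /=.
apply: ereal_sup_le => _ [h /= hf <-]; exists h => //= x.
exact: le_trans (hf x) (fg x).
Qed.

Lemma le_int_abs (D : set T) (f : T -> R) (G : T -> \bar R) (M : R) :
  (forall x, D x -> (`|f x|)%:E <= G x) -> (forall x, 0 <= G x) ->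
  \int[mu]_x G x <= M%:E ->
  (`| fine (\int[mu]_(x in D) (f x)%:E) | <= M)%R.
Proof.
move=> fG G0 GM.
have key : forall (k : T -> \bar R), (forall x, 0 <= k x) ->
   (forall x, D x -> k x <= (`|f x|)%:E) ->
   0 <= \int[mu]_(x in D) k x <= M%:E.
  move=> k k0 kf; apply/andP; split; first exact: integral_ge0.
  rewrite integral_mkcond; apply: le_trans GM; apply: le_intT.
    by move=> x; rewrite /patch; case: ifP.
  move=> x; rewrite /patch; case: ifP => [/set_mem Dx|_]; last exact: G0.
  exact: le_trans (kf x Dx) (fG x Dx).
have h1 : forall x, D x -> (fun x => (f x)%:E)^\+ x <= (`|f x|)%:E.
  move=> x _; rewrite funeposE -EFin_max lee_fin ge_max normr_ge0 andbT.
  exact: ler_norm.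
have h2 : forall x, D x -> (fun x => (f x)%:E)^\- x <= (`|f x|)%:E.
  move=> x _; rewrite funenegE -EFinN -EFin_max lee_fin ge_max normr_ge0 andbT.
  by rewrite -normrN; exact: ler_norm.
have /andP[p0 pM] := key _ (fun x => funepos_ge0 _ x) h1.
have /andP[n0 nM] := key _ (fun x => funeneg_ge0 _ x) h2.
rewrite integralE.
move: p0 pM n0 nM.
set a := \int[mu]_(x in D) _. set b := \int[mu]_(x in D) _.
case: a => [a| |] //; case: b => [b| |] // => a0 aM b0 bM.
rewrite -EFinB /= ; move: a0 aM b0 bM; rewrite !lee_fin => a0 aM b0 bM.
rewrite ler_norml; apply/andP; split; lra.
Qed.
End A.
Section B.
Context (R : realType).
Lemma rs_int_bound m (r : nat -> R) (x f : R -> R) t B :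
  (forall i, (i < m)%N -> r i < r i.+1) -> 0 <= B -> (forall s, `|f s| <= B) ->
  `|rs_int m r x f t| <= B * \sum_(i < m) `|x (r i.+1) - x (r i)|.
Proof.
move=> rlt B0 fB.
pose c (i : 'I_m) := B * (`|x (r i.+1) - x (r i)| / (r i.+1 - r i)).
pose A (i : 'I_m) : set R := `[r i, r i.+1[%classic.
pose F (i : 'I_m) (s : R) := (c i * \1_(A i) s)%:E.
have c0 : forall i, 0 <= c i.
  move=> i; apply: mulr_ge0 => //; apply: divr_ge0 => //.
  by rewrite subr_ge0 ltW // rlt.
have F0 : forall i s, (0 <= F i s)%E.
  by move=> i s; rewrite lee_fin mulr_ge0 // indicE ler0n.
apply: (@le_int_abs _ _ _ lebesgue_measure _ _ (fun s => \sum_(i < m) F i s)).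
- move=> s _; rewrite /F sumEFin lee_fin normrM.
  apply: le_trans (ler_wpM2r (normr_ge0 _) (fB s)) _.
  rewrite /pl_slope; apply: le_trans (ler_wpM2l B0 (ler_norm_sum _ _ _)) _.
  rewrite mulr_sumr; apply: ler_sum => i _.
  rewrite /c indicE /A; case: ifP => /andP H.
    have -> : s \in `[r i, r i.+1[%classic by rewrite inE /= in_itv /=; exact/andP.
    rewrite mulr1 normrM (ger0_norm (x := (_^-1))) //.
    by rewrite invr_ge0 subr_ge0 ltW // rlt.
  have -> : s \in `[r i, r i.+1[%classic = false.
    by apply/negbTE/negP; rewrite inE /= in_itv /= => /andP.
  by rewrite normr0 !mulr0.
- by move=> s; apply: sume_ge0 => i _; exact: F0.
- rewrite ge0_integral_sum //; last first.
    move=> i; apply/measurable_EFinP; apply: measurable_funM => //.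
    by apply: measurable_indic; exact: measurable_itv.
  rewrite mulr_sumr -sumEFin; apply: lee_sum => i _; rewrite le_eqVlt; apply/orP; left; apply/eqP.
  have -> : (\int[lebesgue_measure]_x F i x)%E = ((c i)%:E * lebesgue_measure (A i))%E.
    rewrite /F; under eq_integral do rewrite EFinM.
    rewrite ge0_integralZl_EFin //; try (by move=> s _; rewrite lee_fin indicE ler0n);
      try (by apply/measurable_EFinP; apply: measurable_indic; exact: measurable_itv).
    by rewrite integral_indic // ?setIT //; exact: measurable_itv.
  rewrite /A lebesgue_measure_itv /= lte_fin rlt // -EFinB -EFinM /=.
  rewrite /c -mulrA divfK //; rewrite subr_eq0; apply/negP => /eqP E.
  by have := rlt i (ltn_ord i); rewrite E ltxx.
Qed.
End B.
Section C.
Context (R : realType).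

Lemma powX_le (x y : R) n : 0 <= x -> x <= y -> x ^+ n <= y ^+ n.
Proof.
move=> x0 xy; apply: lerXn2r => //; rewrite nnegrE //; exact: le_trans xy.
Qed.

Lemma pow_sum_le (I : Type) (s : seq I) (a : I -> R) N :
  (0 < N)%N -> (forall i, 0 <= a i) ->
  (\sum_(i <- s) a i) ^+ N <= (size s)%:R ^+ N * \sum_(i <- s) a i ^+ N.
Proof.
move=> N0 a0.
pose M := \big[Num.max/0]_(i <- s) a i.
have M0 : 0 <= M.
  rewrite /M; apply: (big_ind (fun x => 0 <= x)) => // u v u0 v0; by rewrite le_max u0.
have h3 : M ^+ N <= \sum_(i <- s) a i ^+ N.
  rewrite /M {M0}; clear M; elim: s => [|x s IH]; first by rewrite !big_nil expr0n eqn0Ngt N0.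
  rewrite !big_cons.
  have S0 : 0 <= \sum_(i <- s) a i ^+ N by apply: sumr_ge0 => i _; exact: exprn_ge0.
  have Ms0 : 0 <= \big[Num.max/0]_(i <- s) a i.
    apply: (big_ind (fun x => 0 <= x)) => // u v u0 v0; by rewrite le_max u0.
  case: (leP (a x) (\big[Num.max/0]_(i <- s) a i)) => H.
    by apply: le_trans IH _; rewrite lerDr exprn_ge0.
  by rewrite lerDl.
have h4 : \sum_(i <- s) a i <= (size s)%:R * M.
  rewrite /M {h3 M0}; clear M; elim: s => [|x s IH]; first by rewrite big_nil mul0r.
  rewrite !big_cons /= -addn1 natrD mulrDl mul1r addrC.
  apply: lerD; last by rewrite le_max lexx.
  apply: le_trans IH _; apply: ler_wpM2l => //; by rewrite le_max lexx orbT.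
apply: le_trans (@powX_le _ _ N _ h4) _; first by apply: sumr_ge0 => i _.
rewrite exprMn; apply: ler_wpM2l => //; exact: exprn_ge0.
Qed.

Lemma prod_le_pow (I : Type) (s : seq I) (a : I -> R) S :
  (forall i, 0 <= a i) -> (forall i, a i <= S) ->
  \prod_(i <- s) a i <= S ^+ size s.
Proof.
move=> a0 aS; elim: s => [|x s IH]; first by rewrite big_nil expr0.
rewrite big_cons exprS /=; apply: ler_pM => //.
by apply: prodr_ge0 => i _.
Qed.

Lemma seq_min (I : eqType) (s : seq I) (g : I -> R) :
  (forall i, 0 < g i) -> exists e, 0 < e /\ forall i, i \in s -> e <= g i.
Proof.
move=> g0; elim: s => [|x s [e [e0 He]]]; first by exists 1.
exists (Num.min (g x) e); split; first by rewrite lt_min g0 e0.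
move=> i; rewrite inE => /orP[/eqP ->|/He Hi]; first by rewrite ge_min lexx.
by rewrite ge_min Hi orbT.
Qed.

Lemma fin_unif (I : finType) (P : I -> R -> R -> Prop) :
  (forall i, exists C h0, 0 < h0 /\ forall h, 0 < h -> h < h0 -> P i C h) ->
  exists C : I -> R, exists h0, 0 < h0 /\
    forall i h, 0 < h -> h < h0 -> P i (C i) h.
Proof.
move=> H.
have H' : forall i, exists p : R * R, 0 < p.2 /\ forall h, 0 < h -> h < p.2 -> P i p.1 h.
  by move=> i; have [C [h0 Hh]] := H i; exists (C, h0).
have [f Hf] := choice H'.
have [e [e0 He]] := @seq_min _ (enum I) (fun i => (f i).2) (fun i => (Hf i).1).
exists (fun i => (f i).1), e; split => // i h h0 he.
apply: (Hf i).2 => //; apply: lt_le_trans he _; apply: He; exact: mem_enum.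
Qed.

End C.
Definition Vr {R : realType} (m : nat) (r : nat -> R) (x : R -> R) : R :=
  \sum_(i < m) `|x (r i.+1) - x (r i)|.

Lemma Vr_ge0 (R : realType) m r x : 0 <= @Vr R m r x.
Proof. by apply: sumr_ge0 => i _. Qed.

Lemma iint_rev_bound (R : realType) d m (r : nat -> R) gt (gw : R -> 'rV[R]_d) cs t :
  (forall i, (i < m)%N -> r i < r i.+1) ->
  `|iint_rev m r gt gw cs t| <= \prod_(c <- cs) Vr m r (chan gt gw c).
Proof.
move=> rlt; elim: cs t => [|c cs IH] t /=; first by rewrite big_nil normr1.
rewrite big_cons mulrC; apply: rs_int_bound => //.
by apply: prodr_ge0 => i _; exact: Vr_ge0.
Qed.

Lemma prod_fill (R : realType) d (F : option 'I_d -> R) al (w : seq 'I_d) :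
  size w = nomega al ->
  \prod_(c <- fill al w) F c = F None ^+ ntau al * \prod_(j <- w) F (Some j).
Proof.
elim: al w => [|a al IH] w /=.
  by case: w => // _; rewrite !big_nil expr0 mulr1.
case: a => /=.
  move=> Hw; rewrite big_cons IH // /ntau /= exprS mulrA.
  done.
case: w => [|j w] //= [Hw]; rewrite !big_cons IH //.
rewrite /ntau /=. rewrite add0n. rewrite mulrCA. done.
Qed.
Lemma sig_bound (R : realType) d m (r : nat -> R) gt (gw : R -> 'rV[R]_d) al Kt :
  (forall i, (i < m)%N -> r i < r i.+1) ->
  Vr m r gt <= Kt ->
  sig_norm2 m r gt gw al <= #|{: (nomega al).-tuple 'I_d}|%:R * (Kt ^+ (2 * ntau al) *
    (\sum_(j < d) Vr m r (fun s => gw s ord0 j)) ^+ (2 * nomega al)).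
Proof.
move=> rlt VK.
set S := \sum_(j < d) _.
have S0 : 0 <= S by apply: sumr_ge0 => j _; exact: Vr_ge0.
rewrite /sig_norm2 mulr_natl -sumr_const; apply: ler_sum => w _.
rewrite -[X in X <= _]ger0_norm ?sqr_ge0 // normrX /iint.
have H := @iint_rev_bound R d m r gt gw (rev (fill al w)) 1 rlt.
rewrite big_rev (@prod_fill R d (fun c => Vr m r (chan gt gw c))) ?size_tuple // in H.
have Hp : \prod_(j <- w) Vr m r (chan gt gw (Some j)) <= S ^+ nomega al.
  rewrite -[X in S ^+ X](size_tuple w); apply: prod_le_pow => j; first exact: Vr_ge0.
  rewrite /S (bigD1 j) //= lerDl; apply: sumr_ge0 => k _; exact: Vr_ge0.
have Hb : `|iint_rev m r gt gw (rev (fill al w)) 1| <= Kt ^+ ntau al * S ^+ nomega al.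
  apply: le_trans H _; apply: ler_pM.
  - exact/exprn_ge0/Vr_ge0.
  - by apply: prodr_ge0 => j _; exact: Vr_ge0.
  - by apply: powX_le VK; exact: Vr_ge0.
  - exact: Hp.
apply: le_trans (@powX_le _ _ _ 2 (normr_ge0 _) Hb) _.
by rewrite exprMn -!exprM mulnC [(nomega al * 2)%N]mulnC.
Qed.
Lemma size_ie d : size (index_enum 'I_d) = d.
Proof. by rewrite -[index_enum _]filter_predT deprecated_filter_index_enum -cardE card_ord. Qed.

Lemma EZ (R : realType) (dT : measure_display) (T : measurableType dT)
  (P : probability T R) d m (X : 'I_m -> 'I_d -> T -> R) n (Cw : 'I_m * 'I_d -> R) h c :
  (forall i j, measurable_fun setT (X i j)) ->
  (forall i j, ('E_P[fun om => (`|X i j om| ^+ (2 * n))%R] <= (Cw (i, j) * h ^+ n)%:E)%E) ->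
  0 <= c ->
  ('E_P[fun om => (c * (\sum_(j < d) \sum_(i < m) `|X i j om|) ^+ (2 * n))%R] <=
    (c * ((if n == 0%N then 1 else d%:R ^+ (2 * n) * m%:R ^+ (2 * n) *
       \sum_(j < d) \sum_(i < m) Cw (i, j))) * h ^+ n)%:E)%E.
Proof.
move=> mX HX c0; rewrite unlock.
case: eqP => [->|/eqP n0].
  rewrite muln0; under eq_integral do rewrite expr0 mulr1.
  rewrite (_ : (fun _ => c%:E) = cst c%:E) // integral_cst //.
  rewrite [X in (_ * X)%E](_ : _ = 1%E); last exact: probability_setT.
  rewrite mule1.
  by rewrite expr0 !mulr1.
pose K := c * (d%:R ^+ (2 * n) * m%:R ^+ (2 * n)).
have K0 : 0 <= K by rewrite /K !mulr_ge0 // exprn_ge0.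
have mf : forall i j, measurable_fun setT (fun om => (K * `|X i j om| ^+ (2 * n))%:E).
  move=> i j; apply/measurable_EFinP; apply: measurable_funM => //.
  apply: measurable_funX; apply: measurableT_comp => //; exact: normr_measurable.
have f0 : forall i j om, (0 <= (K * `|X i j om| ^+ (2 * n))%:E)%E.
  by move=> i j om; rewrite lee_fin mulr_ge0 // exprn_ge0.
apply: (@le_trans _ _ (\int[P]_om (\sum_(j < d) \sum_(i < m) (K * `|X i j om| ^+ (2 * n))%:E))%E).
  apply: le_intT.
    by move=> om; rewrite lee_fin mulr_ge0 // exprn_ge0 // sumr_ge0 // => j _; apply: sumr_ge0.
  move=> om; rewrite (eq_bigr (fun j => (\sum_(i < m) K * `|X i j om| ^+ (2 * n))%:E)); last by move=> j _; rewrite sumEFin.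
  rewrite sumEFin lee_fin.
  have n2 : (0 < 2 * n)%N by rewrite muln_gt0 /=; case: (n) n0.
  apply: le_trans (ler_wpM2l c0 (@pow_sum_le _ _ _ _ _ n2 _)) _.
    by move=> j; apply: sumr_ge0.
  rewrite size_ie mulrA mulr_sumr; apply: ler_sum => j _.
  apply: le_trans (ler_wpM2l _ (@pow_sum_le _ _ _ _ _ n2 _)) _ => //.
    by apply: mulr_ge0 => //; exact: exprn_ge0.
  rewrite size_ie mulrA mulr_sumr; apply: ler_sum => i _.
  by rewrite /K !mulrA.
rewrite (ge0_integral_sum P measurableT (fun j => emeasurable_sum _ (fun i => mf i j))
   (fun j om _ => sume_ge0 (fun i _ => f0 i j om) _)).
have -> : c * (d%:R ^+ (2 * n) * m%:R ^+ (2 * n) * \sum_(j < d) \sum_(i < m) Cw (i, j)) * h ^+ n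
   = \sum_(j < d) \sum_(i < m) K * (Cw (i, j) * h ^+ n).
  rewrite (_ : c * _ * _ = K * ((\sum_(j < d) \sum_(i < m) Cw (i, j)) * h ^+ n)); last by rewrite /K !mulrA.
  rewrite mulr_suml mulr_sumr; apply: eq_bigr => j _.
  by rewrite mulr_suml mulr_sumr.
rewrite -sumEFin; apply: lee_sum => j _.
rewrite (ge0_integral_sum P measurableT (fun i => mf i j) (fun i om _ => f0 i j om)).
rewrite -sumEFin; apply: lee_sum => i _.
under eq_integral do rewrite EFinM.
have mX' : measurable_fun setT (fun om => (`|X i j om| ^+ (2 * n))%:E).
  apply/measurable_EFinP; apply: measurable_funX; apply: measurableT_comp => //; exact: normr_measurable.
have f0' : forall om, [set: T]%classic om -> (0 <= (`|X i j om| ^+ (2 * n))%:E)%E.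
  by move=> om _; rewrite lee_fin exprn_ge0.
rewrite (ge0_integralZl_EFin P measurableT f0' mX' K0).
have HX' := HX i j; rewrite unlock in HX'.
apply: le_trans (lee_wpmul2l _ HX') _; first by rewrite lee_fin.
by rewrite -EFinM.
Qed.
Theorem lemma3p4 (R : realType) (dT : measure_display) (T : measurableType dT)
  (P : probability T R) (d m : nat)
  (r : R -> nat -> R)                      (* vertices, for each step size h *)
  (gt : R -> T -> R -> R)                  (* gamma^tau, for each h and sample *)
  (gw : R -> T -> R -> 'rV[R]_d) :         (* gamma^omega, for each h and sample *)
  (forall h, 0 < h -> vertices m (r h)) ->
  (forall h, 0 < h -> forall om,
     linear_on_pieces m (r h) (gt h om) /\
     forall j : 'I_d, linear_on_pieces m (r h) (fun s => gw h om s ord0 j)) ->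
  (* the omega-increments are random variables *)
  (forall h, 0 < h -> forall i, (i < m)%N -> forall j : 'I_d,
     measurable_fun [set: T]
       (fun om => gw h om (r h i.+1) ord0 j - gw h om (r h i) ord0 j)) ->
  (* (1) tau-increments are deterministic *)
  (forall h, 0 < h -> forall i, (i < m)%N -> forall om om',
     gt h om (r h i.+1) - gt h om (r h i) = gt h om' (r h i.+1) - gt h om' (r h i)) ->
  (* (2a) tau-increments are O(h) *)
  (forall i, (i < m)%N -> exists C : R, exists h0 : R, 0 < h0 /\
     forall h, 0 < h -> h < h0 -> forall om,
       `|gt h om (r h i.+1) - gt h om (r h i)| <= C * h) ->
  (* (2b) E |(gamma^omega increment)_j|^{2k} = O(h^k) *)
  (forall i, (i < m)%N -> forall (j : 'I_d) (k : nat),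
     exists C : R, exists h0 : R, 0 < h0 /\
     forall h, 0 < h -> h < h0 ->
       ('E_P[fun om => (`|gw h om (r h i.+1) ord0 j - gw h om (r h i) ord0 j| ^+ (2 * k))%R]
         <= (C * h ^+ k)%:E)%E) ->
  forall al : seq letter,
    exists C : R, exists h0 : R, 0 < h0 /\
    forall h, 0 < h -> h < h0 ->
      ('E_P[fun om => (sig_norm2 m (r h) (gt h om) (gw h om) al)%R]
        <= (C * h ^+ two_ord al)%:E)%E.
Proof.
move=> Hv Hlin Hmeas Hdet Htau Hom al.
have [Ct [h1 [h10 Ht]]] := @fin_unif R 'I_m
  (fun i C h => forall om, `|gt h om (r h i.+1) - gt h om (r h i)| <= C * h)
  (fun i => Htau i (ltn_ord i)).
have [Cw [h2 [h20 Hw]]] := @fin_unif R ('I_m * 'I_d)%type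
  (fun p C h => ('E_P[fun om => (`|gw h om (r h p.1.+1) ord0 p.2 - gw h om (r h p.1) ord0 p.2| ^+ (2 * nomega al))%R]
     <= (C * h ^+ nomega al)%:E)%E)
  (fun p => Hom p.1 (ltn_ord p.1) p.2 (nomega al)).
pose Kt := \sum_(i < m) `|Ct i|.
pose Cz := if nomega al == 0%N then 1 else d%:R ^+ (2 * nomega al) * m%:R ^+ (2 * nomega al) *
       \sum_(j < d) \sum_(i < m) Cw (i, j).
pose Nw : R := #|{: (nomega al).-tuple 'I_d}|%:R.
exists (Nw * Kt ^+ (2 * ntau al) * Cz), (Num.min h1 h2); split; first by rewrite lt_min h10 h20.
move=> h h0; rewrite lt_min => /andP[hh1 hh2].
have rlt := (Hv h h0).2.2.
have Kt0 : 0 <= Kt by apply: sumr_ge0 => i _.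
have VK : forall om, Vr m (r h) (gt h om) <= Kt * h.
  move=> om; rewrite /Vr /Kt mulr_suml; apply: ler_sum => i _.
  apply: le_trans (Ht i h h0 hh1 om) _; apply: ler_wpM2r; [exact: ltW | exact: ler_norm].
have Nw0 : 0 <= Nw by rewrite /Nw ler0n.
pose c := Nw * (Kt * h) ^+ (2 * ntau al).
have c0 : 0 <= c by rewrite /c mulr_ge0 // exprn_ge0 // mulr_ge0 // ltW.
apply: (@le_trans _ _ ('E_P[fun om => (c * (\sum_(j < d) \sum_(i < m)
     `|gw h om (r h i.+1) ord0 j - gw h om (r h i) ord0 j|) ^+ (2 * nomega al))%R])%E).
  rewrite !expectation.unlock; apply: le_intT.
    by move=> om; rewrite lee_fin /sig_norm2; apply: sumr_ge0 => w _; exact: sqr_ge0.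
  move=> om; rewrite lee_fin /c -mulrA.
  exact: (sig_bound _ _ _ _ _ _ _ _ rlt (VK om)).
apply: le_trans (@EZ _ _ _ P d m (fun (i : 'I_m) (j : 'I_d) om => gw h om (r h i.+1) ord0 j - gw h om (r h i) ord0 j)
   (nomega al) Cw h c _ _ c0) _.
- move=> i j; apply: Hmeas => //.
- move=> i j; exact: (Hw (i, j) h h0 hh2).
rewrite lee_fin /c /two_ord exprD exprMn.
rewrite -/Cz le_eqVlt; apply/orP; left; apply/eqP; ring.
Qed.
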